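(* Let $M$ be a positive integer and let $K$ be an integer with $q_{KL}-1\le K\le M$. Then for every $q\in\mathcal U(M)\cap(1,K+1]$, the quasi-greedy expansion $\alpha(q)=(\alpha_i(q))$ satisfies \[M-K\le\alpha_i(q)\le K\quad\text{for all }i\ge1.\]
   Context: For a positive integer $J$, $\mathcal U(J)$ is the set of $q\in(1,J+1]$ such that $1$ has exactly one expansion $1=\sum_{i\ge1}d_iq^{-i}$ with $d_i\in\{0,1,\dots,J\}$. For $q\in(1,M+1]$, $\alpha(q)=\alpha_1(q)\alpha_2(q)\dots$ is the quasi-greedy $q$-expansion of $1$ over the alphabet $\{0,1,\dots,M\}$, i.e. the lexicographically largest sequence $(a_i)\in\{0,\dots,M\}^{\mathbb N}$ not ending in $0^\infty$ with $\sum a_iq^{-i}=1$. Let $(\tau_i)_{i\ge0}$ be the Thue–Morse sequence ($\tau_0=0$, $\tau_{2^n}\dots\tau_{2^{n+1}-1}=(1-\tau_0)\dots(1-\tau_{2^n-1})$); $q_{KL}=q_{KL}(M)$ is the base with $\alpha(q_{KL})=\lambda_1\lambda_2\dots$, $\lambda_i=k+\tau_i-\tau_{i-1}$ if $M=2k$, $\lambda_i=k+\tau_i$ if $M=2k+1$. *)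

(* Defs.v *)
From Stdlib Require Import Reals Arith Lia.
Open Scope R_scope.

(* Sequences of digits are functions nat -> nat; only indices i >= 1 are
   meaningful (d i = d_i); the value at index 0 is ignored. *)

Definition expansion (J : nat) (q : R) (d : nat -> nat) : Prop :=
  (forall i, (1 <= i)%nat -> (d i <= J)%nat) /\
  infinite_sum (fun n => INR (d (S n)) / q ^ (S n)) 1.

Definition in_U (J : nat) (q : R) : Prop :=
  1 < q <= INR J + 1 /\
  (exists d, expansion J q d) /\
  (forall d d', expansion J q d -> expansion J q d' ->
     forall i, (1 <= i)%nat -> d i = d' i).

Definition not_ending_in_zeros (d : nat -> nat) : Prop :=
  forall n, exists i, (n < i)%nat /\ d i <> 0%nat.

Definition lex_le (b a : nat -> nat) : Prop :=
  (forall i, (1 <= i)%nat -> b i = a i) \/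
  (exists n, (1 <= n)%nat /\
     (forall i, (1 <= i)%nat -> (i < n)%nat -> b i = a i) /\ (b n < a n)%nat).

Definition quasi_greedy (M : nat) (q : R) (a : nat -> nat) : Prop :=
  expansion M q a /\ not_ending_in_zeros a /\
  (forall b, expansion M q b -> not_ending_in_zeros b -> lex_le b a).

(* Thue--Morse sequence, following the block definition:
   tau_0 = 0 and, for 2^k <= n < 2^(k+1), tau_n = 1 - tau_(n - 2^k). *)
Fixpoint tau_aux (fuel n : nat) : nat :=
  match fuel with
  | O => 0%nat
  | S f => match n with
           | O => 0%nat
           | _ => (1 - tau_aux f (n - 2 ^ Nat.log2 n))%nat
           end
  end.
Definition tau (n : nat) : nat := tau_aux n n.

Definition lambdaKL (M : nat) (i : nat) : nat :=
  let k := Nat.div2 M in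
  if Nat.even M then (k + tau i - tau (i - 1))%nat else (k + tau i)%nat.

Definition is_qKL (M : nat) (q : R) : Prop :=
  1 < q <= INR M + 1 /\ quasi_greedy M q (lambdaKL M).

(* Main.v *)
Require Import Defs.
From Stdlib Require Import Reals Arith.
Open Scope R_scope.
From Stdlib Require Import Reals Arith Lia Lra.
From Coquelicot Require Import Coquelicot.
From Stdlib Require Import ssreflect ClassicalEpsilon.

Section V.
Variable (M : nat) (q : R).
Hypothesis hq : 1 < q.

Definition fd (d : nat -> nat) (k : nat) : R := INR (d (S k)) / q ^ (S k).
Definition val d := Series (fd d).
Definition bnd (d : nat -> nat) := forall i, (1 <= i)%nat -> (d i <= M)%nat.

Lemma q0 : 0 < q. Proof. lra. Qed.

Lemma gb_series : is_series (fun k => INR M / q * (/ q) ^ k) (INR M / (q - 1)).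
Proof.
  have h : Rabs (/ q) < 1.
  { rewrite Rabs_pos_eq. apply (Rmult_lt_reg_l q); [lra|]; rewrite Rinv_r; lra. left; apply Rinv_0_lt_compat; lra. }
  have H := is_series_scal_l (INR M / q) _ _ (is_series_geom _ h).
  rewrite /scal /= /mult /= in H.
  replace (INR M / (q - 1)) with (INR M / q * / (1 - / q)). exact H.
  field. split; lra.
Qed.

Lemma fd_bound d : bnd d -> forall k, 0 <= fd d k <= INR M / q * (/ q) ^ k.
Proof.
  intros hb k. unfold fd. have hp : 0 < q ^ S k by apply pow_lt; lra.
  split.
  - apply Rdiv_le_0_compat; [apply pos_INR | lra].
  - rewrite pow_inv. replace (INR M / q * / q ^ k) with (INR M / q ^ S k).
    2: { simpl. field. split; [apply pow_nonzero|]; lra. }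
    apply Rmult_le_compat_r. left; apply Rinv_0_lt_compat; lra.
    apply le_INR, hb; lia.
Qed.

Lemma ex_fd d : bnd d -> ex_series (fd d).
Proof.
  intro hb. apply: (ex_series_le _ (fun k => INR M / q * (/ q) ^ k)).
  - intro n. rewrite /norm /= /abs /=. have := fd_bound d hb n. intros [h1 h2].
    rewrite Rabs_pos_eq; lra.
  - eexists; apply gb_series.
Qed.

Lemma val_bounds d : bnd d -> 0 <= val d <= INR M / (q - 1).
Proof.
  intro hb. split.
  - have Z : Series (fun _ : nat => 0) = 0.
    { rewrite (Series_ext _ (fun n => 0 * fd d n)). rewrite Series_scal_l; ring. intro; ring. }
    rewrite /val -Z. apply Series_le. intro n. have := fd_bound d hb n; lra.
    by apply ex_fd.
  - rewrite /val -(is_series_unique _ _ gb_series). apply Series_le. apply fd_bound; auto.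
    eexists; apply gb_series.
Qed.

Lemma val_ext d e : (forall i, (1 <= i)%nat -> d i = e i) -> val d = val e.
Proof.
  intro h. apply Series_ext. intro n. rewrite /fd h //. lia.
Qed.

Lemma val_rec d : bnd d -> val d = (INR (d 1%nat) + val (fun i => d (S i))) / q.
Proof.
  intro hb. rewrite /val Series_incr_1. 2: by apply ex_fd.
  rewrite (Series_ext _ (fun k => / q * fd (fun i => d (S i)) k)).
  - rewrite Series_scal_l /fd. simpl. field. lra.
  - intro n. rewrite /fd. simpl. field. split; [apply pow_nonzero|]; lra.
Qed.


Lemma bern n : 1 + INR n * (q - 1) <= q ^ n.
Proof.
  induction n as [|n IH]. simpl; lra.
  rewrite S_INR /=. have h0 : 0 <= INR n by apply pos_INR.
  have := Rmult_le_compat_l q _ _ (ltac:(lra)) IH.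
  have : 0 <= INR n * ((q - 1) * (q - 1)) by apply Rmult_le_pos; nra. nra.
Qed.

Lemma small_zero D E : (forall n, Rabs D * q ^ n <= E) -> D = 0.
Proof.
  intro h. destruct (Req_dec D 0) as [|hne]; auto. exfalso.
  have ha : 0 < Rabs D by apply Rabs_pos_lt.
  destruct (INR_unbounded (E / (Rabs D * (q - 1)))) as [n hn].
  have := h n. have := bern n.
  have hp : 0 < Rabs D * (q - 1) by apply Rmult_lt_0_compat; lra.
  have : E < INR n * (Rabs D * (q - 1)).
  { apply (Rmult_lt_compat_r (Rabs D * (q - 1))) in hn; auto.
    rewrite /Rdiv Rmult_assoc Rinv_l in hn; lra. }
  intros h1 h2 h3. have := Rmult_le_compat_l (Rabs D) _ _ (Rlt_le _ _ ha) h2. nra.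
Qed.

Lemma val_shift_rec d n : bnd d ->
  val (fun i => d (n + i)%nat) = (INR (d (S n)) + val (fun i => d (S n + i)%nat)) / q.
Proof.
  intro hb. have hb' : bnd (fun i => d (n + i)%nat) by intros i hi; apply hb; lia.
  rewrite (val_rec _ hb').
  f_equal. f_equal. f_equal. f_equal. lia.
  apply val_ext. intros i _. f_equal. lia.
Qed.

Lemma val_char d rr C : bnd d -> (forall n, 0 <= rr n <= C) ->
  (forall n, rr n = (INR (d (S n)) + rr (S n)) / q) -> val d = rr 0%nat.
Proof.
  intros hb hr hrec.
  set t := fun n => val (fun i => d (n + i)%nat).
  have ht : forall n, t n = (INR (d (S n)) + t (S n)) / q.
  { intro n. apply val_shift_rec; auto. }
  have hD : forall n, rr 0%nat - t 0%nat = (rr n - t n) / q ^ n.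
  { induction n as [|n IH]. simpl; field.
    rewrite IH hrec ht /=. field. split; [apply pow_nonzero|]; lra. }
  have htb : forall n, 0 <= t n <= INR M / (q - 1).
  { intro n. apply val_bounds. intros i hi; apply hb; lia. }
  have h0 : t 0%nat = val d. { apply val_ext. intros; f_equal. }
  have := small_zero (rr 0%nat - t 0%nat) (C + INR M / (q - 1)).
  rewrite h0. intro H. enough (rr 0%nat - val d = 0) by lra. rewrite -h0. apply H.
  intro n. rewrite (hD n). have hp : 0 < q ^ n by apply pow_lt; lra.
  have hn0 : q ^ n <> 0 by lra.
  rewrite (Rabs_div _ _ hn0) (Rabs_pos_eq (q ^ n) (Rlt_le _ _ hp)).
  rewrite /Rdiv Rmult_assoc (Rinv_l _ hn0) Rmult_1_r.
  have := hr n. have := htb n. intros. apply Rabs_le. lra.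
Qed.

Lemma floor_le N y : 0 <= y -> exists dg, (dg <= N)%nat /\ INR dg <= y /\ (dg = N \/ y < INR dg + 1).
Proof.
  intro hy. induction N as [|N IH].
  - exists 0%nat. refine (conj (le_n 0) (conj _ (or_introl eq_refl))). simpl; lra.
  - destruct IH as [dg [h1 [h2 h3]]]. destruct h3 as [->|h3].
    + destruct (Rle_lt_dec (INR (S N)) y).
      * exists (S N). refine (conj (le_n _) (conj r (or_introl eq_refl))).
      * exists N. rewrite S_INR in r. refine (conj (le_S _ _ (le_n _)) (conj h2 (or_intror _))). lra.
    + exists dg. refine (conj (le_S _ _ h1) (conj h2 (or_intror h3))).
Qed.

Hypothesis hqM : q <= INR M + 1.

Lemma step r : 0 <= r <= INR M / (q - 1) ->
  exists p : nat * R, (fst p <= M)%nat /\ 0 <= snd p <= INR M / (q - 1) /\ q * r = INR (fst p) + snd p.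
Proof.
  intro hr. have hB : 1 <= INR M / (q - 1).
  { apply (Rmult_le_reg_r (q - 1)). lra. rewrite /Rdiv Rmult_assoc Rinv_l; lra. }
  have hqr : 0 <= q * r by nra.
  destruct (floor_le M (q * r) hqr) as [dg [h1 [h2 h3]]].
  exists (dg, q * r - INR dg). simpl. repeat split; auto; try lra.
  destruct h3 as [->|h3]; [|lra].
  have : q * (INR M / (q - 1)) - INR M = INR M / (q - 1) by field; lra.
  nra.
Qed.

Lemma exists_exp x : 0 <= x <= INR M / (q - 1) -> exists e, bnd e /\ val e = x.
Proof.
  intro hx.
  have H : forall r, exists p : nat * R, 0 <= r <= INR M / (q - 1) ->
    (fst p <= M)%nat /\ 0 <= snd p <= INR M / (q - 1) /\ q * r = INR (fst p) + snd p.
  { intro r. destruct (Rle_dec 0 r); [destruct (Rle_dec r (INR M / (q - 1)))|].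
    - destruct (step r) as [p hp]. lra. exists p; auto.
    - exists (0%nat, 0). intros; lra.
    - exists (0%nat, 0). intros; lra. }
  set F := fun r => proj1_sig (constructive_indefinite_description _ (H r)).
  have hF : forall r, 0 <= r <= INR M / (q - 1) ->
    (fst (F r) <= M)%nat /\ 0 <= snd (F r) <= INR M / (q - 1) /\ q * r = INR (fst (F r)) + snd (F r).
  { intro r. exact (proj2_sig (constructive_indefinite_description _ (H r))). }
  set rr := fun n => Nat.iter n (fun r => snd (F r)) x.
  have hrr : forall n, 0 <= rr n <= INR M / (q - 1).
  { induction n as [|n IH]. exact hx. simpl. apply (hF _ IH). }
  set e := fun i => match i with 0%nat => 0%nat | S n => fst (F (rr n)) end.
  have hb : bnd e. { intros [|i] hi. lia. apply (hF _ (hrr i)). }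
  exists e. split; auto.
  apply (val_char e rr (INR M / (q - 1))); auto.
  intro n. destruct (hF _ (hrr n)) as [_ [_ h]]. simpl.
  change (rr (S n)) with (snd (F (rr n))). rewrite -h. field. lra.
Qed.

End V.

Definition cns (c : nat) (e : nat -> nat) : nat -> nat :=
  fun i => match i with 0%nat => 0%nat | 1%nat => c | S j => e j end.

Lemma val_cons M q c e : 1 < q -> bnd M e -> (c <= M)%nat -> val q (cns c e) = (INR c + val q e) / q.
Proof.
  intros hq hb hc.
  have hb' : bnd M (cns c e). { intros [|[|i]] hi; simpl; try lia; auto; apply hb; lia. }
  rewrite (val_rec M q hq _ hb').
  have hv : val q (fun i => cns c e (S i)) = val q e.
  { apply val_ext. intros [|i] hi. lia. reflexivity. }
  rewrite hv. reflexivity.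
Qed.

Lemma val_pos M q d i : 1 < q -> bnd M d -> (1 <= i)%nat -> d i <> 0%nat -> 0 < val q d.
Proof.
  intros hq. revert d. induction i as [|i IH]; intros d hb hi hd. lia.
  have hb' : bnd M (fun j => d (S j)) by intros j hj; apply hb; lia.
  rewrite (val_rec M q hq d hb).
  have := val_bounds M q hq _ hb'. intros [h1 h2].
  destruct i as [|i].
  - have : 1 <= INR (d 1%nat). { change 1 with (INR 1). apply le_INR. lia. }
    intro. apply Rdiv_lt_0_compat; lra.
  - have := IH (fun j => d (S j)) hb' ltac:(lia) hd. intro.
    apply Rdiv_lt_0_compat; [have := pos_INR (d 1%nat)|]; lra.
Qed.

Lemma exp_iff M q d : 1 < q -> expansion M q d <-> bnd M d /\ val q d = 1.
Proof.
  intro hq. split.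
  - intros [hb hs]. split; auto. apply is_series_Reals in hs.
    apply (is_series_unique _ _ hs).
  - intros [hb hv]. split; auto. apply is_series_Reals.
    rewrite -hv. apply Series_correct. apply (ex_fd M q hq d hb).
Qed.

Theorem lemma7p1 (M K : nat) (qKL : R) :
  (0 < M)%nat -> is_qKL M qKL ->
  qKL - 1 <= INR K -> (K <= M)%nat ->
  forall q : R, in_U M q -> q <= INR K + 1 ->
  forall a : nat -> nat, quasi_greedy M q a ->
  forall i : nat, (1 <= i)%nat -> (M - K <= a i)%nat /\ (a i <= K)%nat.
Proof.
  intros hM [[hKL1 hKL2] [hKLe _]] hK1 hK2 q [[hq1 hqM] [_ huniq]] hqK a [hae [hanz _]] i hi.
  have hk : (Nat.div2 M <= K)%nat.
  { apply (exp_iff M qKL _ hKL1) in hKLe. destruct hKLe as [hb hv].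
    rewrite (val_rec M qKL hKL1 _ hb) in hv.
    have hl : lambdaKL M 1 = S (Nat.div2 M).
    { unfold lambdaKL. change (tau 1) with 1%nat. change (tau (1 - 1)) with 0%nat.
      cbv zeta. destruct (Nat.even M); rewrite ?Nat.sub_0_r Nat.add_1_r; reflexivity. }
    rewrite hl S_INR in hv.
    have hb' : bnd M (fun i => lambdaKL M (S i)) by intros j hj; apply hb; lia.
    have := val_bounds M qKL hKL1 _ hb'. intros [h0 _].
    have : INR (Nat.div2 M) + 1 <= qKL.
    { set X := INR (Nat.div2 M) + 1 + val qKL (fun i => lambdaKL M (S i)).
      have e : X = qKL * (X / qKL) by field; lra.
      rewrite hv in e. rewrite /X in e. lra. }
    intro h. apply INR_le. lra. }
  have hMd := Nat.div2_odd M.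
  destruct (Nat.eq_dec K M) as [->|hKM].
  { apply (exp_iff M q _ hq1) in hae. destruct hae as [hb _]. have := hb i hi. lia. }
  have hKM' : (K < M)%nat by lia.
  apply (exp_iff M q _ hq1) in hae. destruct hae as [hb hv].
  set T := fun n => val q (fun j => a (n + j)%nat).
  set B := INR M / (q - 1).
  have hqB : q * B - B = INR M. { rewrite /B. field. lra. }
  have hT0 : T 0%nat = 1. { rewrite -hv. apply val_ext. intros; reflexivity. }
  have hR : forall n, INR (a (S n)) = q * T n - T (S n).
  { intro n. rewrite /T (val_shift_rec M q hq1 a n hb). field. lra. }
  have hbn : forall n, bnd M (fun j => a (n + j)%nat).
  { intros n j hj. apply hb. lia. }
  have hTb : forall n, 0 < T n <= B.
  { intro n. split.
    - destruct (hanz n) as [j [hj1 hj2]].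
      apply (val_pos M q _ (j - n) hq1 (hbn n)). lia.
      replace (n + (j - n))%nat with j by lia. exact hj2.
    - apply (val_bounds M q hq1 _ (hbn n)). }
  have hut : forall n e, bnd M e -> val q e = T n -> forall j, (1 <= j)%nat -> e j = a (n + j)%nat.
  { induction n as [|n IH]; intros e he hve j hj.
    - apply (huniq e a); auto.
      + apply (exp_iff M q _ hq1). split; auto. rewrite hve. exact hT0.
      + apply (exp_iff M q _ hq1). auto.
    - have hc : (a (S n) <= M)%nat by apply hb; lia.
      have := IH (cns (a (S n)) e) ltac:(intros [|[|k]] hkk; simpl; try lia; auto; apply he; lia).
      rewrite (val_cons M q _ _ hq1 he hc) hve.
      have e1 : (INR (a (S n)) + T (S n)) / q = T n.
      { have := hR n. intro h. rewrite h. field. lra. }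
      intro H. have := H e1 (S j) ltac:(lia). simpl.
      destruct j as [|j]. lia. intro h. rewrite h. f_equal. lia. }
  have hA : forall n, (a (S n) < M)%nat -> T (S n) < 1.
  { intros n han. apply Rnot_le_lt. intro hge.
    destruct (exists_exp M q hq1 hqM (T (S n) - 1)) as [e [he hve]].
    { fold B. have := hTb (S n). lra. }
    have hc : (S (a (S n)) <= M)%nat by lia.
    have hbe : bnd M (cns (S (a (S n))) e).
    { intros [|[|k]] hkk; simpl; try lia; auto; apply he; lia. }
    have := hut n (cns (S (a (S n))) e) hbe.
    rewrite (val_cons M q _ _ hq1 he hc) hve S_INR.
    have e1 : (INR (a (S n)) + 1 + (T (S n) - 1)) / q = T n.
    { have := hR n. intro h. rewrite h. field. lra. }
    intro H. have := H e1 1%nat (le_n _). simpl. rewrite Nat.add_1_r. lia. }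
  have hBp : forall n, (0 < a (S n))%nat -> B - 1 < T (S n).
  { intros n han. apply Rnot_le_lt. intro hge.
    destruct (exists_exp M q hq1 hqM (T (S n) + 1)) as [e [he hve]].
    { fold B. have := hTb (S n). lra. }
    have hc : (a (S n) - 1 <= M)%nat by have := hb (S n); lia.
    have hbe : bnd M (cns (a (S n) - 1) e).
    { intros [|[|k]] hkk; simpl; try lia; auto; apply he; lia. }
    have := hut n (cns (a (S n) - 1) e) hbe.
    rewrite (val_cons M q _ _ hq1 he hc) hve minus_INR; [|lia].
    have e1 : (INR (a (S n)) - INR 1 + (T (S n) + 1)) / q = T n.
    { have := hR n. intro h. rewrite h /=. field. lra. }
    intro H. have := H e1 1%nat (le_n _). simpl. rewrite Nat.add_1_r. lia. }
  have hup : forall n, (a (S n) <= K)%nat.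
  { induction n as [|n IH].
    - have := hR 0%nat. rewrite hT0. have := hTb 1%nat. intros h1 h2.
      have : INR (a 1%nat) < INR (S K). { rewrite S_INR. lra. }
      intro h. apply INR_lt in h. lia.
    - have h1 := hA n ltac:(lia). have := hR (S n). have := hTb (S (S n)). have := hTb (S n).
      intros h2 h3 h4.
      have : INR (a (S (S n))) < INR (S K).
      { rewrite S_INR h4. have : q * T (S n) < q by nra. lra. }
      intro h. apply INR_lt in h. lia. }
  have hlo : forall n, (M - K <= a (S n))%nat.
  { induction n as [|n IH].
    - destruct (Nat.eq_dec (a 1%nat) M) as [e|hne]. lia.
      have h1 := hA 0%nat ltac:(have := hb 1%nat; lia).
      have h2 := hR 0%nat. rewrite hT0 in h2.
      have h3 : 0 < INR (a 1%nat) by lra.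
      have h4 : (0 < a 1%nat)%nat by apply INR_lt; simpl; lra.
      have h5 := hBp 0%nat h4.
      have h6 : INR M < 2 * (q - 1).
      { have : B < 2 by lra. rewrite /B. intro h.
        apply (Rmult_lt_compat_r (q - 1)) in h; [|lra].
        rewrite /Rdiv Rmult_assoc Rinv_l in h; lra. }
      have : INR M < INR (2 * a 1%nat). { rewrite mult_INR /=. lra. }
      intro h. apply INR_lt in h.
      destruct (Nat.odd M); simpl in hMd; lia.
    - have h1 := hBp n ltac:(lia). have := hR (S n). have := hTb (S (S n)).
      intros h2 h3.
      have : INR (M - K) < INR (S (a (S (S n)))).
      { rewrite S_INR minus_INR; [|lia]. rewrite h3.
        have : q * (B - 1) < q * T (S n) by apply Rmult_lt_compat_l; lra. lra. }
      intro h. apply INR_lt in h. lia. }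
  destruct i as [|n]. lia. split; auto.
Qed.
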